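(* Let $\mathfrak g$ be a $7$-dimensional real nilpotent Lie algebra and let $\varphi\in\Lambda^3\mathfrak g^*$ define a calibrated $\mathrm{G}_2$-structure on $\mathfrak g$. Then $\varphi$ is not exact; in particular $H^3(\mathfrak g^* )\neq0$.
   Context: A $3$-form $\varphi\in\Lambda^3\mathfrak g^*$ on a $7$-dimensional Lie algebra defines a $\mathrm{G}_2$-structure if there is a basis $f^1,\dots,f^7$ of $\mathfrak g^*$ with $\varphi=f^{127}+f^{347}+f^{567}+f^{135}-f^{236}-f^{146}-f^{245}$; it is calibrated if $d\varphi=0$, where $d$ is the Chevalley–Eilenberg differential, and $H^3(\mathfrak g^* )$ is the corresponding cohomology. *)

(* Defs.v *)
(* A 7-dimensional real Lie algebra is modelled as R^7 = 'rV[R]_7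
   with a bracket; R ranges over real closed fields (contains the reals case). *)
From HB Require Import structures.
From mathcomp Require Import all_boot all_order all_algebra.
Set Implicit Arguments. Unset Strict Implicit. Unset Printing Implicit Defensive.
Import Order.TTheory GRing.Theory Num.Theory.
Local Open Scope ring_scope.

Section Defs.
Variable R : rcfType.
Notation V := 'rV[R]_7.

Definition is_lie_bracket (br : V -> V -> V) : Prop :=
  [/\ (forall a x y z, br (a *: x + y) z = a *: br x z + br y z),
      (forall a x y z, br z (a *: x + y) = a *: br z x + br z y),
      (forall x, br x x = 0) &
      (forall x y z, br x (br y z) + br y (br z x) + br z (br x y) = 0)].

Fixpoint iter_br (br : V -> V -> V) (x : nat -> V) (n : nat) : V :=
  match n with
  | 0 => x 0%N
  | m.+1 => br (x 0%N) (iter_br br (fun i => x i.+1) m)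
  end.

(* nilpotent: the lower central series reaches 0 *)
Definition is_nilpotent (br : V -> V -> V) : Prop :=
  exists n, forall x : nat -> V, iter_br br x n = 0.

Definition is_form2 (b : V -> V -> R) : Prop :=
  [/\ (forall a x y z, b (a *: x + y) z = a * b x z + b y z),
      (forall a x y z, b z (a *: x + y) = a * b z x + b z y) &
      (forall x, b x x = 0)].

Definition is_form3 (p : V -> V -> V -> R) : Prop :=
  [/\ (forall a x y z w, p (a *: x + y) z w = a * p x z w + p y z w),
      (forall a x y z w, p w (a *: x + y) z = a * p w x z + p w y z),
      (forall a x y z w, p z w (a *: x + y) = a * p z w x + p z w y) &
      [/\ (forall x y, p x x y = 0), (forall x y, p x y x = 0) &
          (forall x y, p y x x = 0)]].

(* Chevalley--Eilenberg differential on 2-forms and 3-forms: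
   d a (x_0,..,x_k) = sum_{i<j} (-1)^{i+j} a([x_i,x_j], x_0,..^i..^j..,x_k) *)
Definition CE_d2 (br : V -> V -> V) (b : V -> V -> R) : V -> V -> V -> R :=
  fun x0 x1 x2 => - b (br x0 x1) x2 + b (br x0 x2) x1 - b (br x1 x2) x0.

Definition CE_d3 (br : V -> V -> V) (p : V -> V -> V -> R)
  : V -> V -> V -> V -> R :=
  fun x0 x1 x2 x3 =>
    - p (br x0 x1) x2 x3 + p (br x0 x2) x1 x3 - p (br x0 x3) x1 x2
    - p (br x1 x2) x0 x3 + p (br x1 x3) x0 x2 - p (br x2 x3) x0 x1.

Definition is_closed3 (br : V -> V -> V) (p : V -> V -> V -> R) : Prop :=
  forall x0 x1 x2 x3, CE_d3 br p x0 x1 x2 x3 = 0.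

Definition is_exact3 (br : V -> V -> V) (p : V -> V -> V -> R) : Prop :=
  exists b, is_form2 b /\ forall x y z, p x y z = CE_d2 br b x y z.

Definition H3_nonzero (br : V -> V -> V) : Prop :=
  exists p, [/\ is_form3 p, is_closed3 br p & ~ is_exact3 br p].

(* the k-th (1-based) covector of the basis of g^* given by the columns of F *)
Definition covec (F : 'M[R]_7) (k : nat) (x : V) : R := (x *m F) 0 (inord k.-1).

Definition wedge3 (f g h : V -> R) (x y z : V) : R :=
  f x * (g y * h z - g z * h y) - f y * (g x * h z - g z * h x)
  + f z * (g x * h y - g y * h x).

Definition G2_model (F : 'M[R]_7) (x y z : V) : R :=
  let f := covec F in
  wedge3 (f 1%N) (f 2%N) (f 7%N) x y z + wedge3 (f 3%N) (f 4%N) (f 7%N) x y z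
  + wedge3 (f 5%N) (f 6%N) (f 7%N) x y z + wedge3 (f 1%N) (f 3%N) (f 5%N) x y z
  - wedge3 (f 2%N) (f 3%N) (f 6%N) x y z - wedge3 (f 1%N) (f 4%N) (f 6%N) x y z
  - wedge3 (f 2%N) (f 4%N) (f 5%N) x y z.

Definition is_G2_structure (p : V -> V -> V -> R) : Prop :=
  exists F : 'M[R]_7, F \in unitmx /\ forall x y z, p x y z = G2_model F x y z.

End Defs.

(* Main.v *)
Require Import Defs.
From HB Require Import structures.
From mathcomp Require Import all_boot all_order all_algebra.
From Stdlib Require Import Ring Classical.
Import Order.TTheory GRing.Theory Num.Theory.
Local Open Scope ring_scope.

Section Poly.
Variable R : comNzRingType.
Definition T : Type := R.
Definition ad (x y : T) : T := (x : R) + y.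
Definition mu (x y : T) : T := (x : R) * y.
Definition op (x : T) : T := - (x : R).
Definition sb (x y : T) : T := (x : R) - y.
Definition z0 : T := 0 : R.
Definition o1 : T := 1 : R.
Lemma Rth : @ring_theory T z0 o1 ad mu sb op eq.
Proof. split=> *; rewrite /ad/mu/sb/op/z0/o1; [exact: add0r|exact: addrC|exact: addrA|exact: mul1r|exact: mulrC|exact: mulrA|exact: mulrDl|by []|exact: subrr]. Qed.
Add Ring Rr : Rth.

Definition d3 (i j k : nat) (a b c : nat -> T) : T :=
  ad (sb (mu (a i) (sb (mu (b j) (c k)) (mu (c j) (b k))))
         (mu (b i) (sb (mu (a j) (c k)) (mu (c j) (a k)))))
     (mu (c i) (sb (mu (a j) (b k)) (mu (b j) (a k)))).
Definition Pstd (a b c : nat -> T) : T :=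
  sb (sb (sb (ad (ad (ad (d3 0 1 6 a b c) (d3 2 3 6 a b c)) (d3 4 5 6 a b c)) (d3 0 2 4 a b c))
  (d3 1 2 5 a b c)) (d3 0 3 5 a b c)) (d3 1 3 4 a b c).
Definition ek (k : nat) : nat -> T := fun i => if i == k then o1 else z0.
Definition crs a b k := Pstd a b (ek k).
Definition n2 (a b : nat -> T) : T :=
  ad (ad (ad (ad (ad (ad (mu (a 0%N) (b 0%N)) (mu (a 1%N) (b 1%N))) (mu (a 2%N) (b 2%N)))
   (mu (a 3%N) (b 3%N))) (mu (a 4%N) (b 4%N))) (mu (a 5%N) (b 5%N))) (mu (a 6%N) (b 6%N)).
Lemma lagrange a b : n2 (crs a b) (crs a b) = sb (mu (n2 a a) (n2 b b)) (mu (n2 a b) (n2 a b)).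
Proof. rewrite /n2 /crs /Pstd /d3 /ek /=. ring. Qed.
Lemma Plin a b c : Pstd a b c = n2 c (crs a b).
Proof. rewrite /n2 /crs /Pstd /d3 /ek /=. ring. Qed.
Lemma key2 a b t : mu (n2 a a) (n2 (fun i => sb (b i) (mu t (a i))) (fun i => sb (b i) (mu t (a i))))
  = ad (sb (mu (n2 a a) (n2 b b)) (mu (n2 a b) (n2 a b)))
       (mu (sb (mu (n2 a a) t) (n2 a b)) (sb (mu (n2 a a) t) (n2 a b))).
Proof. rewrite /n2. ring. Qed.
End Poly.
Arguments ad {R}. Arguments mu {R}. Arguments sb {R}. Arguments op {R}.
Arguments d3 {R}. Arguments Pstd {R}. Arguments ek {R}. Arguments crs {R}. Arguments n2 {R}.
Arguments lagrange {R}. Arguments Plin {R}. Arguments key2 {R}.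

Section Real.
Variable R : rcfType.

Lemma sqr_ge0' (x : R) : 0 <= x * x.
Proof. by rewrite -expr2 sqr_ge0. Qed.

Lemma sos7 (a : nat -> R) : n2 a a = 0 -> forall i, (i < 7)%N -> a i = 0.
Proof.
rewrite /n2 /ad /mu => /eqP.
rewrite !paddr_eq0 ?addr_ge0 ?sqr_ge0' // !mulf_eq0 !orbb.
move=> /andP[/andP[/andP[/andP[/andP[/andP[h0 h1] h2] h3] h4] h5] h6].
by case=> [|[|[|[|[|[|[|]]]]]]] // _; apply/eqP.
Qed.

Lemma Pstd_ext (a b c c' : nat -> R) :
  (forall i, (i < 7)%N -> c i = c' i) -> Pstd a b c = Pstd a b c'.
Proof. move=> H; rewrite /Pstd /d3 !H //. Qed.

Lemma cross_par (a b : nat -> R) :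
  (forall c, Pstd a b c = 0) -> (exists2 i, (i < 7)%N & a i != 0) ->
  exists t, forall i, (i < 7)%N -> b i = t * a i.
Proof.
move=> H [i0 Hi0 Hai0].
have L : (n2 a a : R) * n2 b b - n2 a b * n2 a b = 0.
  by have := H (crs a b); rewrite Plin lagrange.
have s0 : (n2 a a : R) != 0.
  apply/eqP=> /sos7 /(_ i0 Hi0) /eqP; exact/negP.
exists ((n2 a b : R) / n2 a a) => i Hi.
have := key2 a b ((n2 a b : R) / n2 a a).
rewrite /mu /ad /sb /= L add0r [_ * (_ / _)]mulrC divfK // subrr mulr0.
move/eqP; rewrite mulf_eq0 (negbTE s0) /= => /eqP /sos7 /(_ i Hi).
by move/eqP; rewrite subr_eq0 => /eqP.
Qed.
End Real.

Section Main.
Variable R : rcfType.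
Notation V := 'rV[R]_7.
Definition coord (u : V) (i : nat) : R := u 0 (inord i).

Lemma G2_coord (F : 'M[R]_7) X Y Z :
  G2_model F X Y Z = Pstd (coord (X *m F)) (coord (Y *m F)) (coord (Z *m F)).
Proof. reflexivity. Qed.

Lemma no_pair (F : 'M[R]_7) (phi : V -> V -> V -> R) (X Y : V) :
  F \in unitmx -> (forall x y z, phi x y z = G2_model F x y z) ->
  X != 0 -> ~ (exists t, Y = t *: X) -> (forall Z, phi X Y Z = 0) -> False.
Proof.
move=> FU HF X0 NY HZ.
have HP : forall c, Pstd (coord (X *m F)) (coord (Y *m F)) c = 0.
  move=> c; have := HZ ((\row_(j < 7) c j) *m invmx F).
  rewrite HF G2_coord mulmxKV // => <-; apply: Pstd_ext => i Hi.
  by rewrite /coord mxE inordK.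
have [t Ht] : exists t, forall i, (i < 7)%N -> coord (Y *m F) i = t * coord (X *m F) i.
  apply: cross_par => //.
  case: (boolP [forall j : 'I_7, (X *m F) 0 j == 0]) => [/forallP Hall|].
    case/negP: X0; apply/eqP.
    have XF : X *m F = 0 by apply/rowP => j; rewrite [RHS]mxE; exact/eqP/Hall.
    by rewrite -(mulmxK FU X) XF mul0mx.
  rewrite negb_forall => /existsP [j Hj]; exists (val j); first exact: ltn_ord.
  by rewrite /coord inord_val.
apply: NY; exists t.
have E : Y *m F = t *: (X *m F).
  apply/rowP => j; rewrite [RHS]mxE; have := Ht j (ltn_ord j).
  by rewrite /coord !inord_val.
by rewrite -(mulmxK FU Y) E -scalemxAl mulmxK.
Qed.
End Main.

Section Lie.
Variable R : rcfType.
Notation V := 'rV[R]_7.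
Variable br : V -> V -> V.
Hypothesis Hl : is_lie_bracket br.

Lemma vv0 (v : V) : v = v + v -> v = 0.
Proof. by rewrite -{1}(addr0 v) => /addrI ->. Qed.

Lemma br0l z : br 0 z = 0.
Proof. case: Hl => L1 _ _ _; apply: vv0; have := L1 1 0 0 z; by rewrite !scale1r !addr0 => h. Qed.
Lemma br0r z : br z 0 = 0.
Proof. case: Hl => _ L2 _ _; apply: vv0; have := L2 1 0 0 z; by rewrite !scale1r !addr0 => h. Qed.
Lemma brDl x y z : br (x + y) z = br x z + br y z.
Proof. case: Hl => L1 _ _ _; by have := L1 1 x y z; rewrite !scale1r. Qed.
Lemma brDr x y z : br z (x + y) = br z x + br z y.
Proof. case: Hl => _ L2 _ _; by have := L2 1 x y z; rewrite !scale1r. Qed.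
Lemma brZr t x z : br z (t *: x) = t *: br z x.
Proof. case: Hl => _ L2 _ _; by have := L2 t x 0 z; rewrite br0r !addr0 => h. Qed.
Lemma brA x y : br x y = - br y x.
Proof.
case: Hl => _ _ A _; apply/eqP; rewrite -addr_eq0; apply/eqP.
have := A (x + y); rewrite brDl !brDr !A add0r addr0 => ->; by [].
Qed.

Lemma e_ne0 : (delta_mx 0 ord0 : V) != 0.
Proof. apply/eqP => /rowP /(_ ord0); rewrite !mxE /= => /eqP; by rewrite oner_eq0. Qed.
Lemma e_indep : ~ exists t : R, (delta_mx 0 ord_max : V) = t *: delta_mx 0 ord0.
Proof.
move=> [t /rowP /(_ ord_max)]; rewrite !mxE /= mulr0 => /eqP; by rewrite oner_eq0.
Qed.

Definition good (X Y : V) := [/\ X != 0, (forall z, br z X = 0),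
  ~ (exists t, Y = t *: X) & forall z, exists l, br z Y = l *: X].

Lemma good_ind n : (forall x, iter_br br x n = 0) -> exists X Y, good X Y.
Proof.
elim: n => [|m IH] Hn.
  by case/negP: e_ne0; apply/eqP; exact: (Hn (fun _ => delta_mx 0 ord0)).
case: (classic (forall x, iter_br br x m = 0)) => [/IH //|].
move=> /not_all_ex_not [x0 Hx0].
have cent : forall x z, br z (iter_br br x m) = 0.
  move=> x z; exact: (Hn (fun i => if i is j.+1 then x j else z)).
case: m IH Hn Hx0 cent => [|k] IH Hn Hx0 cent.
  exists (delta_mx 0 ord0), (delta_mx 0 ord_max); split.
  - exact: e_ne0.
  - move=> z; exact: (cent (fun _ => delta_mx 0 ord0) z).
  - exact: e_indep.
  - move=> z; exists 0; rewrite scale0r; exact: (cent (fun _ => delta_mx 0 ord_max) z).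
set X := iter_br br x0 k.+1.
have cX : forall z, br z X = 0 by move=> z; exact: cent.
have X0 : X != 0 by apply/eqP.
case: (classic (exists Y, (forall z, br z Y = 0) /\ ~ (exists t, Y = t *: X))).
  move=> [Y [cY nY]]; exists X, Y; split => // z; exists 0; by rewrite scale0r cY.
move=> Hno.
set W := iter_br br (fun i => x0 i.+1) k.
have hX : X = br (x0 0%N) W by [].
exists X, W; split => //.
  move=> [t Wt]; case/negP: X0; apply/eqP; by rewrite hX Wt brZr cX scaler0.
move=> z; have cz : forall z', br z' (br z W) = 0.
  move=> z'; exact: (cent (fun i => if i is j.+1 then x0 j.+1 else z) z').
apply: NNPP => nl; apply: Hno; exists (br z W); split => // -[t ht]; apply: nl.
Qed.
End Lie.

Lemma form2_0 (R : rcfType) (b : 'rV[R]_7 -> 'rV[R]_7 -> R) z : is_form2 b -> b 0 z = 0.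
Proof.
case=> L1 _ _; have := L1 1 0 0 z; rewrite !scale1r !addr0 mul1r.
by rewrite -{1}(addr0 (b 0 z)) => /addrI <-.
Qed.

Lemma form2_Z (R : rcfType) (b : 'rV[R]_7 -> 'rV[R]_7 -> R) t x z :
  is_form2 b -> b (t *: x) z = t * b x z.
Proof.
move=> Hb; have := Hb; case=> L1 _ _; have := L1 t x 0 z.
by rewrite addr0 form2_0 // addr0.
Qed.

Theorem mainTheorem5 (R : rcfType) (br : 'rV[R]_7 -> 'rV[R]_7 -> 'rV[R]_7)
  (phi : 'rV[R]_7 -> 'rV[R]_7 -> 'rV[R]_7 -> R) :
  is_lie_bracket br -> is_nilpotent br ->
  is_form3 phi -> is_G2_structure phi -> is_closed3 br phi ->
  ~ is_exact3 br phi /\ H3_nonzero br.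
Proof.
move=> Hl [n Hn] Hf [F [FU HF]] Hc.
have NE : ~ is_exact3 br phi.
  move=> [b [Hb Hex]].
  have [X [Y [X0 cX nY lY]]] := @good_ind R br Hl n Hn.
  apply: (@no_pair R F phi X Y FU HF X0 nY) => Z.
  have [l hl] := lY Z.
  rewrite Hex /CE_d2 (@brA R br Hl X Y) (@brA R br Hl X Z) !cX oppr0 !form2_0 //.
  rewrite (@brA R br Hl Y Z) hl -scaleNr form2_Z //.
  by case: Hb => _ _ ->; rewrite mulr0 !oppr0 !addr0.
split=> //; exists phi; split=> //.
Qed.
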